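(* Let $N\ge 2$, $p\ge 2$, $0<r_0<R_0\le\infty$, $\Omega=B]r_0,R_0[$, and let $V\in C(\Omega)$ satisfy either $V>0$ in $\Omega$ or $V\equiv 0$. Let $u$ be a positive radial strictly monotone $C^2$-subsolution and $v$ a positive radial strictly monotone $C^2$-supersolution of $-\Delta_p w-V|w|^{p-2}w=0$ in $\Omega$. Then at least one of the following holds: (i) $(u/v)'(r)\le 0$ for all $r\in[r_0,R_0[$; (ii) there exists $\rho^*\in[r_0,R_0[$ such that $(u/v)'(r)\ge 0$ for all $r\in[\rho^*,R_0[$.
   Context: $\Delta_p w=\nabla\cdot(|\nabla w|^{p-2}\nabla w)$. $B]r_0,R_0[=\{x\in\mathbb{R}^N: r_0<|x|<R_0\}$, $B[r_0,R_0[=\{x: r_0\le|x|<R_0\}$. A $C^2$-subsolution (resp. supersolution) in $\Omega$ is $w\in C^2(B[r_0,R_0[)$ with $-\Delta_p w-V|w|^{p-2}w\le 0$ (resp. $\ge0$) pointwise in $\Omega$. Radial functions $w(x)=\phi(|x|)$ are identified with $\phi$ and $'$ denotes derivative in $r=|x|$; strictly monotone means $w'>0$ on $[r_0,R_0[$ or $w'<0$ on $[r_0,R_0[$. *)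

(* Defs.v *)
From HB Require Import structures.
From mathcomp Require Import all_boot all_order all_algebra.
From mathcomp Require Import all_classical all_reals all_analysis.
Set Implicit Arguments. Unset Strict Implicit. Unset Printing Implicit Defensive.
Import Order.TTheory GRing.Theory Num.Theory.
Import numFieldNormedType.Exports.
Local Open Scope ring_scope.

Definition eucl {R : realType} {N : nat} (x : 'rV[R]_N) : R :=
  Num.sqrt (\sum_(i < N) (x 0 i) ^+ 2).

Definition ebase {R : realType} {N : nat} (i : 'I_N) : 'rV[R]_N := delta_mx 0 i.

Definition grad {R : realType} {N : nat} (w : 'rV[R]_N -> R) (x : 'rV[R]_N)
  : 'rV[R]_N := \row_(i < N) derive w x (ebase i).

Definition plap {R : realType} {N : nat} (p : R) (w : 'rV[R]_N -> R)
  (x : 'rV[R]_N) : R :=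
  \sum_(i < N)
     derive (fun y => powR (eucl (grad w y)) (p - 2) * (grad w y) 0 i)
            x (ebase i).

Definition in_annulus {R : realType} {N : nat} (r0 : R) (R0 : \bar R)
  (x : 'rV[R]_N) : Prop := r0 < eucl x /\ ((eucl x)%:E < R0)%E.

Definition radial {R : realType} (N : nat) (phi : R -> R) : 'rV[R]_N -> R :=
  fun x => phi (eucl x).

(* phi is C^2 on [r0, R0[ (up to the inner boundary): it is C^2 on some
   open interval ]r0 - d, R0[ with d > 0. *)
Definition C2_profile {R : realType} (r0 : R) (R0 : \bar R) (phi : R -> R)
  : Prop :=
  exists2 d : R, 0 < d & forall r : R, r0 - d < r -> (r%:E < R0)%E ->
    [/\ derivable phi r 1, derivable (derive1 phi) r 1
      & {for r, continuous (derive1 (derive1 phi))}].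

Definition subsolution {R : realType} {N : nat} (p : R) (V : 'rV[R]_N -> R)
  (r0 : R) (R0 : \bar R) (w : 'rV[R]_N -> R) : Prop :=
  forall x, in_annulus r0 R0 x ->
    - plap p w x - V x * (powR `|w x| (p - 2) * w x) <= 0.

Definition supersolution {R : realType} {N : nat} (p : R) (V : 'rV[R]_N -> R)
  (r0 : R) (R0 : \bar R) (w : 'rV[R]_N -> R) : Prop :=
  forall x, in_annulus r0 R0 x ->
    - plap p w x - V x * (powR `|w x| (p - 2) * w x) >= 0.

Definition strictly_monotone_profile {R : realType} (r0 : R) (R0 : \bar R)
  (phi : R -> R) : Prop :=
  (forall r, r0 <= r -> (r%:E < R0)%E -> 0 < derive1 phi r) \/
  (forall r, r0 <= r -> (r%:E < R0)%E -> derive1 phi r < 0).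

(* Main.v *)
Require Import Defs.
From HB Require Import structures.
From mathcomp Require Import all_boot all_order all_algebra.
From mathcomp Require Import all_classical all_reals all_analysis.
From mathcomp Require Import ring lra.
Import Order.TTheory GRing.Theory Num.Theory.
Import numFieldNormedType.Exports.
Local Open Scope ring_scope.
Set Implicit Arguments. Unset Strict Implicit. Unset Printing Implicit Defensive.
Local Open Scope classical_set_scope.

Section S.
Variable R : realType.

Lemma derive_line (V : normedModType R) (f : V -> R) a v :
  derive f a v = derive (fun h : R => f (h *: v + a)) 0 1.
Proof.
rewrite /derive; set g1 := fun h => h^-1 *: _; set g2 := fun h => h^-1 *: _.
suff -> : g1 = g2 by [].
by rewrite funeqE /g1 /g2 => h /=; rewrite addr0 scale0r add0r [_%:A]mulr1.
Qed.

Definition eucl2 {N} (y : 'rV[R]_N) := \sum_(i < N) (y 0 i) ^+ 2.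

Lemma eucl2_ge0 N (y : 'rV[R]_N) : 0 <= eucl2 y.
Proof. by apply: sumr_ge0 => i _; exact: sqr_ge0. Qed.

Lemma eucl2_shift N (y : 'rV[R]_N) j h :
  eucl2 (h *: ebase j + y) = eucl2 y + h * (2 * y 0 j) + h ^+ 2.
Proof.
rewrite /eucl2 /ebase.
under eq_bigr => k _ do rewrite !mxE /=.
rewrite (bigD1 j) //= eqxx (bigD1 j (P := predT)) //=.
under eq_bigr => k /negbTE kj do rewrite kj mulr0 add0r.
by rewrite mulr1; ring.
Qed.

Lemma eucl2_scale N (y : 'rV[R]_N) c : eucl2 (c *: y) = c ^+ 2 * eucl2 y.
Proof.
rewrite /eucl2 mulr_sumr; apply: eq_bigr => k _; rewrite mxE; ring.
Qed.

Lemma euclE N (y : 'rV[R]_N) : eucl y = Num.sqrt (eucl2 y).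
Proof. by []. Qed.

Lemma eucl_scale N (y : 'rV[R]_N) c : eucl (c *: y) = `|c| * eucl y.
Proof.
by rewrite !euclE eucl2_scale sqrtrM ?sqr_ge0 // sqrtr_sqr.
Qed.

Lemma eucl2_ebase N (j : 'I_N) : eucl2 (ebase j : 'rV[R]_N) = 1.
Proof.
have := eucl2_shift (0 : 'rV[R]_N) j 1.
rewrite addr0 scale1r => ->.
rewrite /eucl2 big1 => [|k _]; last by rewrite mxE expr0n.
by rewrite mxE; ring.
Qed.

Lemma eucl_ebase N (j : 'I_N) : eucl (ebase j : 'rV[R]_N) = 1.
Proof. by rewrite euclE eucl2_ebase sqrtr1. Qed.

End S.
Section S2.
Variable R : realType.

Lemma eucl_gt0_eucl2 N (y : 'rV[R]_N) : 0 < eucl y -> 0 < eucl2 y.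
Proof. by rewrite euclE sqrtr_gt0. Qed.

Lemma derive_radial N (phi : R -> R) (y : 'rV[R]_N) j :
  0 < eucl y -> derivable phi (eucl y) 1 ->
  derive (@radial R N phi) y (ebase j) = derive1 phi (eucl y) * (y 0 j / eucl y).
Proof.
move=> ey dphi; rewrite derive_line.
set q := fun h : R => Num.sqrt (eucl2 y + h * (2 * y 0 j) + h ^+ 2).
have -> : (fun h : R => @radial R N phi (h *: ebase j + y)) = phi \o q.
  by apply/funext => h; rewrite /radial /= euclE eucl2_shift.
have q0 : q 0 = eucl y by rewrite /q mul0r addr0 expr0n /= addr0.
have e2 := eucl_gt0_eucl2 ey.
have hin : is_derive (0:R) 1 (fun h : R => eucl2 y + h * (2 * y 0 j) + h ^+ 2) (2 * y 0 j).
  by apply: is_derive_eq; rewrite !scale0r !add0r addr0 mul1r [_%:A]mulr1.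
have hs : is_derive (eucl2 y + 0 * (2 * y 0 j) + 0 ^+ 2) 1 Num.sqrt (2 * Num.sqrt (eucl2 y))^-1.
  by rewrite mul0r addr0 expr0n /= addr0; apply: is_derive1_sqrt.
have hq : is_derive (0:R) 1 q ((2 * Num.sqrt (eucl2 y))^-1 * (2 * y 0 j)).
  exact: (@is_derive1_comp R Num.sqrt (fun h : R => eucl2 y + h * (2 * y 0 j) + h ^+ 2) 0 _ _ hs hin).
have hp : is_derive (q 0) 1 phi (derive1 phi (eucl y)).
  by rewrite q0 derive1E; apply: derivableP.
have := is_derive1_comp hp hq.
move=> [_ ->].
rewrite -euclE; field.
by rewrite gt_eqF.
Qed.
End S2.
Section S3.
Variable R : realType.

Lemma grad_radial N (phi : R -> R) (y : 'rV[R]_N) :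
  0 < eucl y -> derivable phi (eucl y) 1 ->
  grad (@radial R N phi) y = (derive1 phi (eucl y) / eucl y) *: y.
Proof.
move=> ey dphi; apply/rowP => j; rewrite !mxE derive_radial //.
by rewrite mulrA mulrAC.
Qed.

Definition Gf (p : R) (phi : R -> R) := fun rho : R =>
  powR `|derive1 phi rho| (p - 2) * derive1 phi rho.

Lemma flux_radial N p (phi : R -> R) (y : 'rV[R]_N) i :
  0 < eucl y -> derivable phi (eucl y) 1 ->
  powR (eucl (grad (@radial R N phi) y)) (p - 2) * (grad (@radial R N phi) y) 0 i
  = Gf p phi (eucl y) * (y 0 i / eucl y).
Proof.
move=> ey dphi; rewrite grad_radial // eucl_scale /Gf mxE.
rewrite normrM (ger0_norm (x := (eucl y)^-1) _) ?invr_gt0 //.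
  rewrite mulfVK ?gt_eqF //; ring.
by rewrite invr_ge0 ltW.
Qed.

Lemma near0_comp (f : R -> R) (P : R -> Prop) (b : R) :
  f x @[x --> (0:R)] --> b -> (\forall r \near b, P r) -> \forall h \near 0, P (f h).
Proof. by move=> c H; exact: c _ H. Qed.

Lemma derivable_cvg (f : R -> R) a : derivable f a 1 -> f x @[x --> a] --> f a.
Proof.
by move=> /derivable1_diffP /differentiable_continuous.
Qed.

Lemma is_derive_sq (c k : R) : 0 < c ->
  is_derive (0:R) 1 (fun h : R => Num.sqrt (c + h * k + h ^+ 2))
     ((2 * Num.sqrt c)^-1 * k).
Proof.
move=> c0.
have hin : is_derive (0:R) 1 (fun h : R => c + h * k + h ^+ 2) k.
  by apply: is_derive_eq; rewrite !scale0r !add0r addr0 mul1r [_%:A]mulr1.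
have hs : is_derive (c + 0 * k + 0 ^+ 2) 1 Num.sqrt (2 * Num.sqrt c)^-1.
  by rewrite mul0r addr0 expr0n /= addr0; apply: is_derive1_sqrt.
exact: (@is_derive1_comp R Num.sqrt (fun h : R => c + h * k + h ^+ 2) 0 _ _ hs hin).
Qed.

End S3.
Section S4.
Variable R : realType.

Lemma plap_radial N (i0 : 'I_N) (p : R) (phi : R -> R) (r : R) :
  0 < r -> (\forall rho \near r, derivable phi rho 1) -> derivable (Gf p phi) r 1 ->
  plap p (@radial R N phi) (r *: ebase i0) =
  derive1 (Gf p phi) r + (N.-1)%:R * (Gf p phi r / r).
Proof.
move=> r0 dphi dG.
set x := r *: ebase i0.
have ex : eucl x = r by rewrite /x eucl_scale eucl_ebase mulr1 gtr0_norm.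
have x0i i : x 0 i = r * (i == i0)%:R by rewrite /x /ebase !mxE.
rewrite /plap (bigD1 i0) //=; congr (_ + _).
  rewrite derive_line derive1E (derive_line (Gf p phi)).
  have cs : (fun h : R => h + r) x @[x --> (0:R)] --> r.
    have dd : derivable (fun h : R => h + r) 0 1 by [].
    by have := derivable_cvg dd; rewrite add0r.
  have H1 := near0_comp cs dphi.
  have H2 := near0_comp cs (lt_nbhsr r0).
  apply: near_eq_derive; near=> h.
  have eh : h *: ebase i0 + x = (h + r) *: ebase i0 by rewrite /x scalerDl.
  have hr : 0 < h + r by near: h.
  have ee : eucl ((h + r) *: ebase i0) = h + r.
    by rewrite eucl_scale eucl_ebase mulr1 gtr0_norm.
  rewrite eh flux_radial ee; last 2 first.
  - by [].
  - by near: h.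
  rewrite /ebase !mxE !eqxx /= mulr1 [_%:A]mulr1 divff ?mulr1 //.
  by rewrite gt_eqF.
rewrite (eq_bigr (fun _ => Gf p phi r / r)) => [|i ni0].
  by rewrite sumr_const cardC1 card_ord mulr_natl.
rewrite derive_line.
have c0 : 0 < eucl2 x.
  by rewrite /x eucl2_scale eucl2_ebase mulr1 exprn_gt0.
have ds := is_derive_sq (2 * x 0 i) c0.
set s := (fun h => Num.sqrt (eucl2 x + h * (2 * x 0 i) + h ^+ 2)) in ds.
have s0 : s 0 = r by rewrite /s mul0r addr0 expr0n /= addr0 -euclE ex.
have spos h : 0 < s h.
  rewrite /s x0i (negbTE ni0) !mulr0 addr0 sqrtr_gt0.
  by apply: (lt_le_trans c0); rewrite lerDl sqr_ge0.
have cs : s h @[h --> (0:R)] --> r.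
  by rewrite -s0; apply: derivable_cvg; case: ds.
have H1 := near0_comp cs dphi.
set m := (fun h => Gf p phi (s h) / s h).
have dm : derivable m 0 1.
  have dGs : derivable (Gf p phi \o s) 0 1.
    have hG : is_derive (s 0) 1 (Gf p phi) ('D_1 (Gf p phi) r) by rewrite s0; exact: derivableP.
    by case: (is_derive1_comp hG ds).
  have dV : derivable (fun h => (s h)^-1) 0 1.
    by apply: derivableV; [rewrite gt_eqF | case: ds].
  exact: (derivableM dGs dV).
transitivity ('D_1 ((fun h : R => h) * m) 0).
  apply: near_eq_derive; near=> h.
  have ee : eucl (h *: ebase i + x) = s h by rewrite euclE eucl2_shift.
  rewrite flux_radial ee; last 2 first.
  - exact: spos.
  - by near: h.
  rewrite !mxE (negbTE ni0) !eqxx /= /m mulr1 mulr0 addr0.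
  by rewrite -[RHS]/(h * (Gf p phi (s h) / s h)) mulrCA.
have hm := derivableP dm.
have := @is_deriveM R R id m 0 1 1 _ (is_derive_id _ _) hm.
move=> [_ ->].
by rewrite scale0r add0r [_%:A]mulr1 /m s0.
Unshelve. all: by end_near. Qed.
End S4.
Section S5.
Variable R : realType.

Lemma powR_pm1 (p y : R) : 0 < y -> powR y (p - 1) = powR y (p - 2) * y.
Proof.
move=> y0; have -> : p - 1 = (p - 2) + 1 by ring.
by rewrite powRD ?powRr1 ?ltW //; apply/implyP => _; rewrite gt_eqF.
Qed.

Lemma key_sign (p d1 d2 x y : R) : 2 <= p -> 0 < d1 * d2 -> 0 < x -> 0 < y ->
  let F0 := powR `|d1| (p-2) * d1 * powR y (p-1) - powR `|d2| (p-2) * d2 * powR x (p-1) in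
  (0 < d1 * y - d2 * x -> 0 < F0) /\ (d1 * y - d2 * x < 0 -> F0 < 0).
Proof.
move=> p2 d12 x0 y0 F0.
have q0 : 0 <= p - 2 by rewrite subr_ge0.
have mono : forall s t : R, 0 <= s -> s <= t -> powR s (p-2) <= powR t (p-2).
  by move=> s t s0 st; apply: ge0_ler_powR => //; rewrite nnegrE // (le_trans s0 st).
have F0E : F0 = powR (`|d1| * y) (p-2) * (d1 * y) - powR (`|d2| * x) (p-2) * (d2 * x).
  rewrite /F0 !powR_pm1 // !powRM ?normr_ge0 ?ltW //.
  move: (`|d1| `^ (p - 2)) (`|d2| `^ (p - 2)) (y `^ (p - 2)) (x `^ (p - 2)) => A B C D; ring.
have d1n0 : d1 != 0 by apply/eqP => d0; move: d12; rewrite d0 mul0r ltxx.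
have d2n0 : d2 != 0 by apply/eqP => d0; move: d12; rewrite d0 mulr0 ltxx.
have [d1p|d1n] := ltP 0 d1.
- have d2p : 0 < d2 by rewrite -(pmulr_rgt0 _ d1p).
  rewrite F0E !gtr0_norm //.
  set al := d1 * y; set be := d2 * x.
  have alp : 0 < al by rewrite mulr_gt0.
  have bep : 0 < be by rewrite mulr_gt0.
  have up : 0 < powR al (p-2) by rewrite powR_gt0.
  have wp : 0 < powR be (p-2) by rewrite powR_gt0.
  split => h.
  + have ab : be <= al by rewrite -subr_ge0 ltW.
    have := mono _ _ (ltW bep) ab.
    have : be < al by rewrite -subr_gt0.
    move=> ? ?; rewrite subr_gt0; nra.
  + have ab : al <= be by rewrite -subr_le0 ltW.
    have := mono _ _ (ltW alp) ab.
    have : al < be by rewrite -subr_lt0.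
    move=> ? ?; rewrite subr_lt0; nra.
- have d1m : d1 < 0 by rewrite lt_neqAle d1n0 d1n.
  have d2m : d2 < 0 by rewrite -(nmulr_rgt0 _ d1m).
  rewrite F0E !ltr0_norm //.
  set al := - d1 * y; set be := - d2 * x.
  have alp : 0 < al by rewrite mulr_gt0 // oppr_gt0.
  have bep : 0 < be by rewrite mulr_gt0 // oppr_gt0.
  have up : 0 < powR al (p-2) by rewrite powR_gt0.
  have wp : 0 < powR be (p-2) by rewrite powR_gt0.
  have e1 : d1 * y = - al by rewrite /al mulNr opprK.
  have e2 : d2 * x = - be by rewrite /be mulNr opprK.
  split => h.
  + have ab : al <= be by lra.
    have := mono _ _ (ltW alp) ab.
    have : al < be by lra.
    move=> ? ?; nra.
  + have ab : be <= al by lra.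
    have := mono _ _ (ltW bep) ab.
    have : be < al by lra.
    move=> ? ?; nra.
Qed.

End S5.
Section S6.
Variable R : realType.

Lemma key_ineq (p d1 d2 x y : R) : 2 <= p -> 0 < d1 * d2 -> 0 < x -> 0 < y ->
  let F0 := powR `|d1| (p-2) * d1 * powR y (p-1) - powR `|d2| (p-2) * d2 * powR x (p-1) in
  F0 < 0 ->
  (p-1) * (`|d1| / x) * F0 <=
  powR `|d1| (p-2) * d1 * ((p-1) * powR y (p-2) * d2) -
  powR `|d2| (p-2) * d2 * ((p-1) * powR x (p-2) * d1).
Proof.
move=> p2 d12 x0 y0 F0.
have q0 : 0 <= p - 2 by rewrite subr_ge0.
have p1 : 0 < p - 1 by lra.
have mono : forall s t : R, 0 <= s -> s <= t -> powR s (p-2) <= powR t (p-2).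
  by move=> s t s0 st; apply: ge0_ler_powR => //; rewrite nnegrE // (le_trans s0 st).
have F0E : F0 = powR (`|d1| * y) (p-2) * (d1 * y) - powR (`|d2| * x) (p-2) * (d2 * x).
  rewrite /F0 !powR_pm1 // !powRM ?normr_ge0 ?ltW //.
  move: (`|d1| `^ (p - 2)) (`|d2| `^ (p - 2)) (y `^ (p - 2)) (x `^ (p - 2)) => A B C D; ring.
have RE : powR `|d1| (p-2) * d1 * ((p-1) * powR y (p-2) * d2) -
  powR `|d2| (p-2) * d2 * ((p-1) * powR x (p-2) * d1) =
  (p - 1) * (d1 * d2) * (powR (`|d1| * y) (p-2) - powR (`|d2| * x) (p-2)).
  rewrite !powRM ?normr_ge0 ?ltW //.
  move: (`|d1| `^ (p - 2)) (`|d2| `^ (p - 2)) (y `^ (p - 2)) (x `^ (p - 2)) => A B C D; ring.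
rewrite RE F0E.
have d1n0 : d1 != 0 by apply/eqP => d0; move: d12; rewrite d0 mul0r ltxx.
have [d1p|d1n] := ltP 0 d1.
- have d2p : 0 < d2 by rewrite -(pmulr_rgt0 _ d1p).
  rewrite !gtr0_norm //.
  set al := d1 * y; set be := d2 * x.
  set u := powR (d1 * y) (p-2); set w := powR (d2 * x) (p-2).
  have alp : 0 < al by rewrite mulr_gt0.
  have bep : 0 < be by rewrite mulr_gt0.
  have up : 0 < u by rewrite powR_gt0.
  have wp : 0 < w by rewrite powR_gt0.
  move=> h.
  have ab : al <= be.
    rewrite leNgt; apply/negP => ba.
    have := mono _ _ (ltW bep) (ltW ba); rewrite -/u -/w => uw.
    move: h; rewrite -/u -/w; nra.
  rewrite -/u -/w -subr_ge0.
  have -> : (p - 1) * (d1 * d2) * (u - w) - (p - 1) * (d1 / x) * (u * al - w * be)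
     = (p - 1) * (d1 / x) * u * (be - al).
    by rewrite /al /be; field; rewrite gt_eqF.
  apply: mulr_ge0; last by rewrite subr_ge0.
  by rewrite !mulr_ge0 ?ltW ?invr_gt0.
- have d1m : d1 < 0 by rewrite lt_neqAle d1n0 d1n.
  have d2m : d2 < 0 by rewrite -(nmulr_rgt0 _ d1m).
  rewrite !ltr0_norm //.
  set u := powR (- d1 * y) (p-2); set w := powR (- d2 * x) (p-2).
  have alp : 0 < - d1 * y by rewrite mulr_gt0 // oppr_gt0.
  have bep : 0 < - d2 * x by rewrite mulr_gt0 // oppr_gt0.
  have up : 0 < u by rewrite powR_gt0.
  have wp : 0 < w by rewrite powR_gt0.
  move=> h.
  have ab : - d2 * x <= - d1 * y.
    rewrite leNgt; apply/negP => ba.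
    have := mono _ _ (ltW alp) (ltW ba); rewrite -/u -/w => uw.
    move: h; rewrite -/u -/w; nra.
  have := mono _ _ (ltW bep) ab; rewrite -/u -/w => wu.
  apply: (@le_trans _ _ 0).
    apply: mulr_ge0_le0; last exact: ltW.
    by apply: mulr_ge0; [lra|apply: divr_ge0; lra].
  by apply: mulr_ge0; [apply: mulr_ge0; lra | lra].
Qed.

End S6.
Section S7.
Variable R : realType.

Lemma deriv_pos_left (E : R -> R) (m a : R) : a < m -> derivable E m 1 ->
  0 < derive1 E m -> exists t, a <= t /\ t < m /\ E t < E m.
Proof.
move=> am d dp.
rewrite derive1E in dp.
have := @cvgr_gt _ _ _ _ _ _ d _ dp.
move=> /(_ _) [e /= e0 He].
set h := - Num.min (e / 2) (m - a).
have hlt : h < 0.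
  by rewrite /h oppr_lt0 lt_min; apply/andP; split; lra.
have hge : - (m - a) <= h.
  by rewrite /h lerN2 ge_min lexx orbT.
have hgt : - e < h.
  by rewrite /h ltrN2 gt_min; apply/orP; left; lra.
have := He h.
rewrite /ball_ /= sub0r normrN ltr0_norm // [_%:A]mulr1 => /(_ ltac:(lra)) /(_ (negbT (lt_eqF hlt))) H.
exists (h + m); split; first lra.
split; first lra.
have : h^-1 < 0 by rewrite invr_lt0.
move: H; set D := E (h + m) - E m => H hi.
have H2 : 0 < h^-1 * D := H.
rewrite -subr_lt0 -/D; nra.
Qed.
End S7.
Section S8.
Variable R : realType.

Lemma is_derive_E (F : R -> R) (K t : R) : derivable F t 1 ->
  is_derive t 1 (fun s => F s * expR (- K * s))
    ((derive1 F t - K * F t) * expR (- K * t)).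
Proof.
move=> dF.
have hF : is_derive t 1 F (derive1 F t) by rewrite derive1E; exact: derivableP.
have hl : is_derive t 1 (fun s : R => - K * s) (- K).
  by apply: is_derive_eq; rewrite [_%:A]mulr1.
have he : is_derive (- K * t) 1 expR (expR (- K * t)) by exact: is_derive_expR.
have hc := @is_derive1_comp R expR (fun s : R => - K * s) t _ _ he hl.
have := @is_deriveM R R F (expR \o (fun s : R => - K * s)) t 1 _ _ hF hc.
move=> hh; apply: is_derive_eq.
rewrite /=; rewrite /GRing.scale /=; ring.
Qed.

Lemma no_cross (F c : R -> R) (a b : R) : a < b ->
  (forall t, a <= t <= b -> derivable F t 1) ->
  {within `[a, b], continuous c} ->
  (forall t, a < t <= b -> F t < 0 -> c t * F t <= derive1 F t) ->
  0 < F a -> 0 <= F b.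
Proof.
move=> ab dF cc hF Fa.
have [M _ HM] := EVT_max (ltW ab) cc.
set K := c M + 1.
set E := fun t => F t * expR (- K * t).
have dE t : a <= t <= b -> is_derive t 1 E ((derive1 F t - K * F t) * expR (- K * t)).
  by move=> /dF; apply: is_derive_E.
have cE : {within `[a, b], continuous E}.
  apply: derivable_within_continuous => t; rewrite in_itv /= => /dE.
  by case.
have [m mab Hm] := EVT_min (ltW ab) cE.
rewrite leNgt; apply/negP => Fb.
have Eb : E b < 0 by rewrite /E pmulr_llt0 ?expR_gt0.
have Em : E m < 0.
  by apply: le_lt_trans (Hm b _) Eb; rewrite in_itv /= lexx ltW.
have Fm : F m < 0 by move: Em; rewrite /E pmulr_llt0 ?expR_gt0.
move: (mab); rewrite in_itv /= => /andP[am mb].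
have Ea : 0 < E a by rewrite /E pmulr_lgt0 ?expR_gt0.
have am' : a < m.
  rewrite lt_neqAle am andbT; apply/eqP => ea.
  by move: Em; rewrite -ea => /(lt_trans Ea); rewrite ltxx.
have mab' : a <= m <= b by rewrite am mb.
have [dEm vEm] := dE m mab'.
have dpos : 0 < derive1 E m.
  rewrite derive1E vEm; apply: mulr_gt0; last exact: expR_gt0.
  have h1 := hF m ltac:(by rewrite am' mb) Fm.
  have h2 := HM m mab.
  rewrite /K; nra.
have [t [ta [tm Et]]] := deriv_pos_left am' dEm dpos.
have := Hm t; rewrite in_itv /= ta (ltW (lt_le_trans tm mb)) => /(_ isT).
by rewrite leNgt Et.
Qed.
End S8.
Section S9.
Variable R : realType.

Lemma hd (f : R -> R) t : derivable f t 1 -> is_derive t 1 f (derive1 f t).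
Proof. by move=> d; rewrite derive1E; exact: derivableP. Qed.

Lemma derive_quot (f g : R -> R) t : derivable f t 1 -> derivable g t 1 -> g t != 0 ->
  derive1 (fun s => f s / g s) t =
  (derive1 f t * g t - f t * derive1 g t) / (g t) ^+ 2.
Proof.
move=> df dg gn0.
have hV := is_deriveV gn0 (hd dg).
have := @is_deriveM R R f (fun s => (g s)^-1) t 1 _ _ (hd df) hV.
move=> [_ hh].
rewrite derive1E.
have -> : (fun s => f s / g s) = f * (fun s => (g s)^-1) by [].
rewrite hh /GRing.scale /=; field; exact: gn0.
Qed.

Lemma is_derive_powRc (f : R -> R) (q t : R) : derivable f t 1 -> 0 < f t ->
  is_derive t 1 (fun s => powR (f s) q) (q * powR (f t) (q - 1) * derive1 f t).
Proof.
move=> df ft.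
have hp : is_derive (f t) 1 (@powR R ^~ q) (q * powR (f t) (q - 1)) by exact: is_derive1_powR.
exact: (@is_derive1_comp R (@powR R ^~ q) f t _ _ hp (hd df)).
Qed.

Lemma Gf_alt (p : R) (phi : R -> R) :
  Gf p phi = (fun s => powR (derive1 phi s ^+ 2) ((p - 2) / 2) * derive1 phi s).
Proof.
apply/funext => s; rewrite /Gf; congr (_ * _).
rewrite -real_normK ?num_real // -powR_mulrn ?normr_ge0 // -powRrM.
by congr powR; field.
Qed.

Lemma derivable_Gf (p : R) (phi : R -> R) (r : R) :
  derivable (derive1 phi) r 1 -> derive1 phi r != 0 -> derivable (Gf p phi) r 1.
Proof.
move=> d dn0; rewrite Gf_alt.
have h2 : is_derive r 1 (fun s => derive1 phi s ^+ 2) (2 * derive1 phi r * derive1 (derive1 phi) r).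
  have := @is_deriveX R R (derive1 phi) 2 r 1 _ (hd d).
  move=> hh; apply: is_derive_eq.
  by rewrite /GRing.scale /=; ring.
have pos : 0 < derive1 phi r ^+ 2 by rewrite exprn_even_gt0.
have d2 : derivable (fun s => derive1 phi s ^+ 2) r 1 by case: h2.
have := is_derive_powRc ((p - 2) / 2) d2 pos.
move=> hP.
have := @is_deriveM R R _ _ r 1 _ _ hP (hd d).
by case.
Qed.
End S9.
Section S10.
Variable R : realType.

Lemma core (p r0 k s : R) (R0 : \bar R) (phi psi W : R -> R) :
  2 <= p -> 0 < r0 -> 0 <= k ->
  (forall r, r0 <= r -> (r%:E < R0)%E ->
     [/\ derivable phi r 1, derivable psi r 1, derivable (Gf p phi) r 1
       & derivable (Gf p psi) r 1]) ->
  (forall r, r0 <= r -> (r%:E < R0)%E -> derivable (derive1 phi) r 1) ->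
  (forall r, r0 <= r -> (r%:E < R0)%E -> 0 < phi r /\ 0 < psi r) ->
  (forall r, r0 <= r -> (r%:E < R0)%E -> 0 < derive1 phi r * derive1 psi r) ->
  (forall r, r0 <= r -> (r%:E < R0)%E -> `|derive1 phi r| = s * derive1 phi r) ->
  (forall r, r0 < r -> (r%:E < R0)%E ->
     0 <= derive1 (Gf p phi) r + k * (Gf p phi r / r) + W r * powR (phi r) (p-1) /\
     derive1 (Gf p psi) r + k * (Gf p psi r / r) + W r * powR (psi r) (p-1) <= 0) ->
  (forall r, r0 <= r -> (r%:E < R0)%E -> derive1 (fun s => phi s / psi s) r <= 0) \/
  (exists2 rho : R, r0 <= rho /\ (rho%:E < R0)%E &
     forall r, rho <= r -> (r%:E < R0)%E -> 0 <= derive1 (fun s => phi s / psi s) r).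
Proof. 
move=> p2 r00 k0 hd1 hdd hpos hsame hs hode.
set G := Gf p phi; set H := Gf p psi.
set P := fun t => powR (phi t) (p-1); set Q := fun t => powR (psi t) (p-1).
set F0 := fun t => G t * Q t - H t * P t.
have sgn t : r0 <= t -> (t%:E < R0)%E ->
    (0 < derive1 (fun s => phi s / psi s) t -> 0 < F0 t) /\
    (derive1 (fun s => phi s / psi s) t < 0 -> F0 t < 0).
  move=> t0 tR.
  have [dp dq _ _] := hd1 t t0 tR.
  have [pp qp] := hpos t t0 tR.
  rewrite derive_quot ?gt_eqF //.
  have q2 : 0 < (psi t) ^+ 2 by rewrite exprn_gt0.
  rewrite !pmulr_lgt0 ?pmulr_llt0 ?invr_gt0 //.
  have := key_sign p2 (hsame t t0 tR) pp qp.
  by rewrite [psi^`()%classic t * phi t]mulrC.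
have dF t : r0 <= t -> (t%:E < R0)%E ->
    is_derive t 1 F0 (derive1 G t * Q t + G t * ((p-1) * powR (psi t) (p-2) * derive1 psi t)
      - (derive1 H t * P t + H t * ((p-1) * powR (phi t) (p-2) * derive1 phi t))).
  move=> t0 tR.
  have [dp dq dG dH] := hd1 t t0 tR.
  have [pp qp] := hpos t t0 tR.
  have hQ := is_derive_powRc (p - 1) dq qp.
  have hP := is_derive_powRc (p - 1) dp pp.
  have := is_deriveB (is_deriveM (hd dG) hQ) (is_deriveM (hd dH) hP).
  have -> : p - 1 - 1 = p - 2 by ring.
  move=> hh; apply: is_derive_eq.
  rewrite /GRing.scale /= /G /H /P /Q.
  move: (Gf p phi t) (Gf p psi t) (derive1 (Gf p phi) t) (derive1 (Gf p psi) t).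
  move: (psi t `^ (p - 1)) (phi t `^ (p - 1)) ((p - 1) * psi t `^ (p - 2) * derive1 psi t).
  move: ((p - 1) * phi t `^ (p - 2) * derive1 phi t) => z1 z2 z3 z4 z5 z6 z7 z8.
  ring.
set c := cst (p - 1) * (cst s * (derive1 phi * (fun t => (phi t)^-1))).
have dc t : r0 <= t -> (t%:E < R0)%E -> derivable c t 1.
  move=> t0 tR.
  have [dp _ _ _] := hd1 t t0 tR.
  have [pp _] := hpos t t0 tR.
  apply: derivableM; first exact: derivable_cst.
  apply: derivableM; first exact: derivable_cst.
  apply: derivableM; first exact: hdd.
  by apply: derivableV; rewrite ?gt_eqF.
have ineq t : r0 < t -> (t%:E < R0)%E -> F0 t < 0 -> c t * F0 t <= derive1 F0 t.
  move=> t0 tR Fn.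
  have t0' : r0 <= t by exact: ltW.
  have [pp qp] := hpos t t0' tR.
  rewrite derive1E; case: (dF t t0' tR) => _ ->.
  have K1 : (p-1) * (`|derive1 phi t| / phi t) * F0 t <=
     G t * ((p-1) * powR (psi t) (p-2) * derive1 psi t) -
     H t * ((p-1) * powR (phi t) (p-2) * derive1 phi t) :=
    key_ineq p2 (hsame t t0' tR) pp qp Fn.
  rewrite (hs t t0' tR) in K1.
  have [A1 A2] := hode t t0 tR.
  have Pp : 0 < P t by rewrite powR_gt0.
  have Qp : 0 < Q t by rewrite powR_gt0.
  rewrite -/(P t) -/(Q t) in A1 A2.
  have tp : 0 < t by exact: lt_trans t0.
  have h3 : 0 <= - (k / t) * F0 t.
    have : 0 <= k / t by apply: divr_ge0 => //; exact: ltW.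
    move=> kt; rewrite mulNr -mulrN; apply: mulr_ge0 => //.
    by rewrite oppr_ge0; exact: ltW.
  have E1 : (derive1 G t + k * (G t / t) + W t * P t) * Q t >= 0 by apply: mulr_ge0 => //; exact: ltW.
  have E2 : (derive1 H t + k * (H t / t) + W t * Q t) * P t <= 0.
    by apply: mulr_le0_ge0 => //; exact: ltW.
  have ct : c t = (p - 1) * (s * (derive1 phi t * (phi t)^-1)) by [].
  rewrite ct.
  move: h3 E1 E2 K1; rewrite /F0.
  move: (derive1 G t) (derive1 H t) (G t) (H t) (P t) (Q t) (W t) => a b g h pt qt w.
  move=> h3 E1 E2 K1.
  rewrite !mulrA in K1 *.
  have ht : t != 0 by rewrite gt_eqF.
  have e1 : a * qt - b * pt >= - (k / t) * (g * qt - h * pt).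
    move: E1 E2; rewrite !mulrDl.
    have -> : k * (g / t) * qt = k / t * (g * qt) by ring.
    have -> : k * (h / t) * pt = k / t * (h * pt) by ring.
    rewrite [w * qt * pt]mulrAC.
    move: (k / t) (g * qt) (h * pt) (a * qt) (b * pt) (w * pt * qt).
    move=> kt gq hp aq bp wpq E1 E2.
    lra.
  move: K1 h3 e1.
  move: ((p - 1) * s * phi^`()%classic t / phi t * (g * qt - h * pt)).
  move: (g * (p - 1) * psi t `^ (p - 2) * psi^`()%classic t).
  move: (h * (p - 1) * phi t `^ (p - 2) * phi^`()%classic t).
  move: (- (k / t) * (g * qt - h * pt)) (a * qt) (b * pt).
  move=> z1 z2 z3 z4 z5 z6 *; lra.
have [[r1 [r1a [r1b r1c]]]|nex] := pselect (exists r1, r0 <= r1 /\ (r1%:E < R0)%E /\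
    0 < derive1 (fun s => phi s / psi s) r1); last first.
  left => r ra rb; rewrite leNgt; apply/negP => pos.
  by apply: nex; exists r.
right; exists r1 => // r r1r rR.
rewrite leNgt; apply/negP => neg.
have rr0 : r0 <= r by exact: le_trans r1r.
have F1 : 0 < F0 r1 by case: (sgn r1 r1a r1b) => + _; apply.
have F2 : F0 r < 0 by case: (sgn r rr0 rR) => _; apply.
have r1r' : r1 < r.
  rewrite lt_neqAle r1r andbT; apply/eqP => e.
  by move: F1; rewrite e => /(lt_trans F2); rewrite ltxx.
have inJ t : r1 <= t <= r -> r0 <= t /\ (t%:E < R0)%E.
  move=> /andP[t1 t2]; split; first exact: le_trans t1.
  by apply: le_lt_trans rR; rewrite lee_fin.
suff : 0 <= F0 r by rewrite leNgt F2.
apply: (@no_cross R F0 c r1 r r1r') => //.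
- move=> t /inJ [t0 tR]; by case: (dF t t0 tR).
- apply: derivable_within_continuous => t; rewrite in_itv /= => /inJ [t0 tR].
  exact: dc.
- move=> t /andP[t1 t2] Fn.
  have [t0 tR] := inJ t ltac:(by rewrite (ltW t1) t2).
  apply: ineq => //; exact: le_lt_trans t1.
Qed.
End S10.

Lemma near_dom (R : realType) (a : R) (R0 : \bar R) (r : R) : a < r -> (r%:E < R0)%E ->
  \forall rho \near r, a < rho /\ (rho%:E < R0)%E.
Proof.
case: R0 => [b| |] //= ar hb.
- near=> rho; split; near: rho; first exact: lt_nbhsr.
  by apply: lt_nbhsl; rewrite lte_fin in hb.
- near=> rho; split; last exact: ltry.
  by near: rho; exact: lt_nbhsr.
Unshelve. all: by end_near. Qed.

Unset Implicit Arguments.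
Close Scope classical_set_scope.

Theorem corollary3p4 (R : realType) (N : nat) (p r0 : R) (R0 : \bar R)
  (V : 'rV[R]_N -> R) (phi psi : R -> R) :
  (2 <= N)%N -> 2 <= p -> 0 < r0 -> (r0%:E < R0)%E ->
  (forall x, in_annulus r0 R0 x -> {for x, continuous V}) ->
  ((forall x, in_annulus r0 R0 x -> 0 < V x) \/
   (forall x, in_annulus r0 R0 x -> V x = 0)) ->
  (* u = phi(|x|): positive, radial, strictly monotone, C^2 subsolution *)
  C2_profile r0 R0 phi ->
  (forall r, r0 <= r -> (r%:E < R0)%E -> 0 < phi r) ->
  strictly_monotone_profile r0 R0 phi ->
  subsolution p V r0 R0 (@radial R N phi) ->
  (* v = psi(|x|): positive, radial, strictly monotone, C^2 supersolution *)
  C2_profile r0 R0 psi ->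
  (forall r, r0 <= r -> (r%:E < R0)%E -> 0 < psi r) ->
  strictly_monotone_profile r0 R0 psi ->
  supersolution p V r0 R0 (@radial R N psi) ->
  (forall r, r0 <= r -> (r%:E < R0)%E ->
     derive1 (fun s => phi s / psi s) r <= 0) \/
  (exists2 rho : R, r0 <= rho /\ (rho%:E < R0)%E &
     forall r, rho <= r -> (r%:E < R0)%E ->
       0 <= derive1 (fun s => phi s / psi s) r).
Proof.
move=> hN hp hr0 hR0 _ _ [dp dp0 Cp] pp mp sub [dq dq0 Cq] pq mq sup.
have N0 : (0 < N)%N by apply: leq_trans hN.
pose i0 : 'I_N := Ordinal N0.
have dphi r : r0 <= r -> (r%:E < R0)%E -> derivable phi r 1 /\ derivable (derive1 phi) r 1.
  by move=> a b; have [] := Cp r ltac:(lra) b.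
have dpsi r : r0 <= r -> (r%:E < R0)%E -> derivable psi r 1 /\ derivable (derive1 psi) r 1.
  by move=> a b; have [] := Cq r ltac:(lra) b.
have nphi r : r0 <= r -> (r%:E < R0)%E -> derive1 phi r != 0.
  by move=> a b; case: mp => h; [rewrite gt_eqF ?h | rewrite lt_eqF ?h].
have npsi r : r0 <= r -> (r%:E < R0)%E -> derive1 psi r != 0.
  by move=> a b; case: mq => h; [rewrite gt_eqF ?h | rewrite lt_eqF ?h].
have quot r : r0 <= r -> (r%:E < R0)%E -> derive1 (fun s => phi s / psi s) r =
    (derive1 phi r * psi r - phi r * derive1 psi r) / (psi r) ^+ 2.
  move=> a b; apply: derive_quot; [exact: (dphi r a b).1 | exact: (dpsi r a b).1|].
  by rewrite gt_eqF ?pq.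
have hode r : r0 < r -> (r%:E < R0)%E ->
    0 <= derive1 (Gf p phi) r + (N.-1)%:R * (Gf p phi r / r) +
      V (r *: ebase i0) * powR (phi r) (p-1) /\
    derive1 (Gf p psi) r + (N.-1)%:R * (Gf p psi r / r) +
      V (r *: ebase i0) * powR (psi r) (p-1) <= 0.
  move=> a b.
  have a' : r0 <= r by exact: ltW.
  have rp : 0 < r by exact: lt_trans a.
  have eX : eucl (r *: ebase i0 : 'rV[R]_N) = r.
    by rewrite eucl_scale eucl_ebase mulr1 gtr0_norm.
  have aX : in_annulus r0 R0 (r *: ebase i0 : 'rV[R]_N) by rewrite /in_annulus eX.
  have nP : \forall rho \near r, derivable phi rho 1.
    apply: filterS (near_dom (a := r0 - dp) _ b); last by lra.
    by move=> rho [h1 h2]; have [] := Cp rho h1 h2.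
  have nQ : \forall rho \near r, derivable psi rho 1.
    apply: filterS (near_dom (a := r0 - dq) _ b); last by lra.
    by move=> rho [h1 h2]; have [] := Cq rho h1 h2.
  have dG : derivable (Gf p phi) r 1.
    by apply: derivable_Gf; [exact: (dphi r a' b).2 | exact: nphi].
  have dH : derivable (Gf p psi) r 1.
    by apply: derivable_Gf; [exact: (dpsi r a' b).2 | exact: npsi].
  have := sub _ aX; have := sup _ aX.
  rewrite /radial eX !plap_radial //.
  rewrite (ger0_norm (ltW (pp r a' b))) (ger0_norm (ltW (pq r a' b))).
  rewrite -(powR_pm1 p (pp r a' b)) -(powR_pm1 p (pq r a' b)).
  move=> h1 h2; split; lra.
have hd1 r : r0 <= r -> (r%:E < R0)%E ->
    [/\ derivable phi r 1, derivable psi r 1, derivable (Gf p phi) r 1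
       & derivable (Gf p psi) r 1].
  move=> a b; split; [exact: (dphi r a b).1 | exact: (dpsi r a b).1 | |].
  - by apply: derivable_Gf; [exact: (dphi r a b).2 | exact: nphi].
  - by apply: derivable_Gf; [exact: (dpsi r a b).2 | exact: npsi].
have hpos r : r0 <= r -> (r%:E < R0)%E -> 0 < phi r /\ 0 < psi r.
  by move=> a b; split; [exact: pp | exact: pq].
have k0 : 0 <= (N.-1)%:R :> R by [].
have core' (s : R) :
    (forall r, r0 <= r -> (r%:E < R0)%E -> 0 < derive1 phi r * derive1 psi r) ->
    (forall r, r0 <= r -> (r%:E < R0)%E -> `|derive1 phi r| = s * derive1 phi r) ->
    (forall r, r0 <= r -> (r%:E < R0)%E -> derive1 (fun s => phi s / psi s) r <= 0) \/
    (exists2 rho : R, r0 <= rho /\ (rho%:E < R0)%E &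
     forall r, rho <= r -> (r%:E < R0)%E -> 0 <= derive1 (fun s => phi s / psi s) r).
  move=> hsame hs.
  exact: (core hp hr0 k0 hd1 (fun r a b => (dphi r a b).2) hpos hsame hs hode).
case: mp => hp1; case: mq => hq1.
- apply: (core' 1) => r a b; first by rewrite mulr_gt0 ?hp1 ?hq1.
  by rewrite mul1r gtr0_norm ?hp1.
- right; exists r0; first by split.
  move=> r a b; rewrite quot //.
  have := hp1 r a b; have := hq1 r a b; have := pp r a b; have := pq r a b.
  move=> h1 h2 h3 h4.
  apply: divr_ge0; last exact: sqr_ge0.
  nra.
- left => r a b; rewrite quot //.
  have := hp1 r a b; have := hq1 r a b; have := pp r a b; have := pq r a b.
  move=> h1 h2 h3 h4.
  apply: mulr_le0_ge0; last by rewrite invr_ge0 sqr_ge0.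
  nra.
- apply: (core' (-1)) => r a b; first by rewrite nmulr_rgt0 ?hp1 ?hq1.
  by rewrite mulN1r ltr0_norm ?hp1.
Qed.
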